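(* Let $t\ge 2q_0+1$ be an integer. For every $s\in H(P_\infty)$ with $s\le t(q+2q_0+1)$ there exists $(a,b,c,d)\in\mathbb{Z}_{\ge0}^4$ with $aq+b(q+q_0)+c(q+2q_0)+d(q+2q_0+1)=s$ and $a+b+c+d\le t$.
   Context: $n\ge2$ is an integer, $q_0=2^n$, $q=2q_0^2$. $H(P_\infty)$ denotes the numerical semigroup generated by $q,\ q+q_0,\ q+2q_0,\ q+2q_0+1$ (this is the Weierstrass semigroup at the point at infinity of the normalization of the Suzuki curve $y^q-y=x^{q_0}(x^q-x)$). *)

(* Defs.v *)
From mathcomp Require Import all_boot.
Set Implicit Arguments. Unset Strict Implicit. Unset Printing Implicit Defensive.

Definition q0 (n : nat) : nat := 2 ^ n.
Definition qS (n : nat) : nat := 2 * (q0 n) ^ 2.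

Definition HPinf (n : nat) (s : nat) : Prop :=
  exists a b c d : nat,
    a * qS n + b * (qS n + q0 n) + c * (qS n + 2 * q0 n)
      + d * (qS n + 2 * q0 n + 1) = s.

(* Main.v *)
Require Import Defs.
From mathcomp Require Import all_boot.
From mathcomp Require Import zify.

Lemma core (Q0 Q t s : nat) :
  0 < Q0 -> Q = 2 * Q0 * Q0 -> Q * t.+1 <= s ->
  s <= t * (Q + 2 * Q0 + 1) ->
  exists a b c d : nat,
    a * Q + b * (Q + Q0) + c * (Q + 2 * Q0) + d * (Q + 2 * Q0 + 1) = s
    /\ a + b + c + d <= t.
Proof.
move=> Hq0 HQ Hlo Hhi.
have [Hd|Hd] := leqP (t * (Q + 2 * Q0 + 1) - s) t.
  exists 0, 0, (t * (Q + 2 * Q0 + 1) - s), (t - (t * (Q + 2 * Q0 + 1) - s)).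
  split; last by lia.
  have E1 : s + (t * (Q + 2 * Q0 + 1) - s) = t * (Q + 2 * Q0 + 1) by lia.
  move: E1 Hd; set D := t * (Q + 2 * Q0 + 1) - s => E1 Hd.
  move: (subnK Hd); set e := t - D => Ht.
  rewrite -Ht in E1; nia.
set R := s - Q * t.
have HR : R < 2 * Q0 * t by nia.
have HRs : s = Q * t + R by rewrite /R; lia.
have HRQ : Q <= R by rewrite /R; nia.
move: HR HRs HRQ; move: R => R HR HRs HRQ.
have Ediv := divn_eq R Q0.
have Hw : R %% Q0 < Q0 by rewrite ltn_mod.
move: Ediv Hw; move: (R %/ Q0) (R %% Q0) => k w Ediv Hw.
have Hk : 2 * Q0 <= k.
  rewrite leqNgt; apply/negP => Hk.
  have : k * Q0 <= (2 * Q0 - 1) * Q0 by apply: leq_mul => //; lia.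
  nia.
have Hk2 : k < 2 * t.
  rewrite ltnNge; apply/negP => Hk2.
  have : 2 * t * Q0 <= k * Q0 by apply: leq_mul.
  nia.
have Ev := odd_double_half (k - 2 * w).
rewrite -muln2 in Ev.
have Hy := leq_b1 (odd (k - 2 * w)).
move: Ev Hy; move: (odd (k - 2 * w) : nat) ((k - 2 * w)./2) => y z Ev Hy.
exists (t - (w + z + y)), y, z, w.
split; last by lia.
have Ht : t - (w + z + y) + (w + z + y) = t by apply: subnK; lia.
move: Ht; move: (t - (w + z + y)) => a Ht.
have Ev' : y + 2 * z + 2 * w = k by lia.
rewrite HRs Ediv -Ht -Ev' HQ. nia.
Qed.

Lemma sum_ge (Q Q0 a b c d : nat) :
  Q * (a + b + c + d) <= a * Q + b * (Q + Q0) + c * (Q + 2 * Q0) + d * (Q + 2 * Q0 + 1).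
Proof. nia. Qed.

Theorem lemma4p6 (n t s : nat) :
  2 <= n ->
  2 * q0 n + 1 <= t ->
  HPinf n s ->
  s <= t * (qS n + 2 * q0 n + 1) ->
  exists a b c d : nat,
    a * qS n + b * (qS n + q0 n) + c * (qS n + 2 * q0 n)
      + d * (qS n + 2 * q0 n + 1) = s
    /\ a + b + c + d <= t.
Proof.
move=> _ _ [a [b [c [d Hs]]]] Hhi.
have [Hm|Hm] := leqP (a + b + c + d) t.
  by exists a, b, c, d.
apply: core => //.
- by rewrite /q0 expn_gt0.
- by rewrite /qS (expnS _ 1) expn1 mulnA.
- rewrite -Hs; apply: leq_trans (sum_ge _ _ _ _ _ _).
  by rewrite leq_mul2l Hm orbT.
Qed.
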